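(* Let $S=\{\rho_1=0<\rho_2<\cdots\}$ be a numerical semigroup. For a positive integer $d$ let $R_d=\{i\ge 1:\ \#A[\rho_i]<d\}$. Then the following are equivalent: (a) $S$ is an Arf semigroup; (b) for every positive integer $d$, $\#R_d=\rho_{\lceil d/2\rceil}+\lfloor d/2\rfloor$.
   Context: A numerical semigroup is a submonoid $S$ of $(\mathbb{N}_0,+)$ with finite complement, with elements listed increasingly $\rho_1=0<\rho_2<\cdots$. $S$ is an Arf semigroup if for all positive integers $i\ge j\ge k$ one has $\rho_i+\rho_j-\rho_k\in S$. For $\rho\in S$, $A[\rho]=\{p\in S:\ \rho-p\in S\}$. *)

(* Defs.v *)
From Stdlib Require Import ClassicalEpsilon.
From mathcomp Require Import all_boot.
Set Implicit Arguments. Unset Strict Implicit. Unset Printing Implicit Defensive.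

Definition numerical_semigroup (S : pred nat) : Prop :=
  S 0 /\ (forall a b, S a -> S b -> S (a + b)) /\
  exists N, forall n, N <= n -> S n.

(* rho S i (for i >= 1) is the i-th element of S in increasing order:
   the element x of S having exactly i-1 elements of S below it. *)
Definition rho (S : pred nat) (i : nat) : nat :=
  epsilon (inhabits 0) (fun x => S x /\ count S (iota 0 x) = i.-1).

(* #A[r] where A[r] = {p in S : r - p in S}; all such p lie in [0, r]. *)
Definition cardA (S : pred nat) (r : nat) : nat :=
  count (fun p => S p && S (r - p)) (iota 0 r.+1).

Definition has_card (P : nat -> Prop) (n : nat) : Prop :=
  exists s : seq nat, uniq s /\ (forall i, i \in s <-> P i) /\ size s = n.

Definition Rset (S : pred nat) (d : nat) : nat -> Prop :=
  fun i => 1 <= i /\ cardA S (rho S i) < d.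

Definition Arf (S : pred nat) : Prop :=
  forall i j k, 1 <= k -> k <= j -> j <= i ->
    S (rho S i + rho S j - rho S k).

(* Main.v *)
Require Import Defs.
From Stdlib Require Import ClassicalEpsilon.
From mathcomp Require Import all_boot zify.
Set Implicit Arguments. Unset Strict Implicit. Unset Printing Implicit Defensive.

Definition cnt (S : pred nat) x := count S (iota 0 x).

Lemma cntS (S : pred nat) x : cnt S x.+1 = cnt S x + S x.
Proof. by rewrite /cnt -addn1 iotaD count_cat /= addn0. Qed.

Lemma cnt_mono (S : pred nat) x y : x <= y -> cnt S x <= cnt S y.
Proof. move=> h; rewrite /cnt -(subnKC h) iotaD count_cat; lia. Qed.

Lemma cnt_strict (S : pred nat) x y : S x -> x < y -> cnt S x < cnt S y.
Proof. move=> Sx h; have := cnt_mono S h; rewrite cntS Sx; lia. Qed.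

Lemma count_all_iota (P : pred nat) m n :
  (forall i, m <= i < m + n -> P i) -> count P (iota m n) = n.
Proof.
move=> h; rewrite (eq_in_count (a2 := predT)) ?count_predT ?size_iota //.
by move=> i; rewrite mem_iota => /h ->.
Qed.

Lemma cnt_big (S : pred nat) N m : (forall n, N <= n -> S n) -> m <= cnt S (N + m).
Proof.
move=> hN; rewrite /cnt iotaD count_cat add0n (count_all_iota (m:=N)); first lia.
by move=> i /andP[h _]; apply: hN.
Qed.

Lemma cnt_exists (S : pred nat) N i : (forall n, N <= n -> S n) ->
  exists x, S x /\ cnt S x = i.
Proof.
move=> hN.
have ex : exists x, i < cnt S x.+1.
  exists (N + i); have := cnt_big i.+1 hN; rewrite addnS; lia.
case: (ex_minnP ex) => x hx hmin.
have hx0 : cnt S x <= i.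
  case: x hx hmin => [|x] hx hmin; first by rewrite /cnt.
  by rewrite leqNgt; apply/negP => /hmin; lia.
move: hx; rewrite cntS; case Sx: (S x) => /= h; last lia.
by exists x; split => //; lia.
Qed.

Lemma rho_spec (S : pred nat) (hS : numerical_semigroup S) i : 1 <= i ->
  S (rho S i) /\ cnt S (rho S i) = i.-1.
Proof.
move=> _; case: hS => _ [_ [N hN]].
rewrite /rho; apply: (epsilon_spec (inhabits 0) (fun x => S x /\ count S (iota 0 x) = i.-1)).
exact: (cnt_exists i.-1 hN).
Qed.

Lemma cnt_inj (S : pred nat) x y : S x -> S y -> cnt S x = cnt S y -> x = y.
Proof.
move=> Sx Sy e; case: (ltngtP x y) => h //.
  by have := cnt_strict Sx h; lia.
by have := cnt_strict Sy h; lia.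
Qed.

Lemma rho_cnt (S : pred nat) (hS : numerical_semigroup S) x : S x -> rho S (cnt S x).+1 = x.
Proof.
move=> Sx; have [h1 h2] := rho_spec hS (ltn0Sn (cnt S x)).
exact: (cnt_inj h1 Sx h2).
Qed.

Lemma rho_mono (S : pred nat) (hS : numerical_semigroup S) i j : 1 <= i -> i <= j -> rho S i <= rho S j.
Proof.
move=> hi hij; have [Si ci] := rho_spec hS hi.
have [Sj cj] := rho_spec hS (leq_trans hi hij).
rewrite leqNgt; apply/negP => h; have := cnt_strict Sj h; lia.
Qed.

Definition Q (S : pred nat) x := forall y z, S y -> S z -> x <= y -> y <= z -> S (y + z - x).

Lemma Arf_Q (S : pred nat) (hS : numerical_semigroup S) :
  Arf S <-> (forall x, S x -> Q S x).
Proof.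
split.
- move=> hA x Sx y z Sy Sz hxy hyz.
  have := hA (cnt S z).+1 (cnt S y).+1 (cnt S x).+1 (ltn0Sn _).
  rewrite !rho_cnt // addnC; apply; rewrite ltnS; exact: cnt_mono.
- move=> hQ i j k hk hkj hji.
  have hj := leq_trans hk hkj; have hi := leq_trans hj hji.
  rewrite addnC; apply: hQ; try apply: (proj1 (rho_spec hS _)) => //; exact: rho_mono.
Qed.


Lemma count_split (a b : pred nat) s :
  count a s = count (fun x => a x && b x) s + count (fun x => a x && ~~ b x) s.
Proof. elim: s => //= y s ->; case: (a y); case: (b y) => /=; lia. Qed.

Lemma count_sub_in (a b : pred nat) s :
  (forall p, p \in s -> a p -> b p) -> count a s <= count b s.
Proof.
elim: s => //= y s IH h.
have h1 : count a s <= count b s by apply: IH => p ps; apply: h; rewrite inE ps orbT.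
case ay: (a y) => /=; last by lia.
by rewrite (h y (mem_head _ _) ay) /=; lia.
Qed.

Lemma count_disj (a b : pred nat) s : (forall p, a p -> ~~ b p) ->
  count (fun p => a p || b p) s = count a s + count b s.
Proof.
move=> h; elim: s => //= y s ->.
case ay: (a y) => /=; last by lia.
by rewrite (negbTE (h y ay)) /=; lia.
Qed.

Lemma count_sub_eq (a b : pred nat) s : (forall p, a p -> b p) ->
  count a s = count b s -> forall p, p \in s -> b p -> a p.
Proof.
move=> h e p ps bp; apply/negPn/negP => nap.
have h1 : 0 < count (fun q => b q && ~~ a q) s.
  by rewrite -has_count; apply/hasP; exists p => //; rewrite bp.
rewrite (count_split b a) in e.
have h2 : count (fun x => b x && a x) s = count a s.
  by apply: eq_count => q; case aq: (a q); rewrite ?(h q aq) ?andbF ?andbT.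
lia.
Qed.

Lemma count_pred1_iota y n : y < n -> count (fun p => p == y) (iota 0 n) = 1.
Proof.
move=> h; have := count_uniq_mem y (iota_uniq 0 n).
by rewrite mem_iota /= h.
Qed.

Lemma count_lt_eq (S : pred nat) t n : t <= n ->
  count (fun p => S p && (p < t)) (iota 0 n) = cnt S t.
Proof.
move=> h; rewrite -(subnKC h) iotaD count_cat /cnt.
rewrite (eq_in_count (a1 := fun p => S p && (p < t)) (a2 := S) (s := iota 0 t)); last first.
  by move=> p; rewrite mem_iota => /andP[_ hp]; rewrite hp andbT.
rewrite (eq_in_count (a1 := fun p => S p && (p < t)) (a2 := pred0)); last first.
  by move=> p; rewrite mem_iota => /andP[hp _]; rewrite /= ltnNge hp andbF.
by rewrite count_pred0 addn0.
Qed.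

Lemma count_lt_le (S : pred nat) t n :
  count (fun p => S p && (p < t)) (iota 0 n) <= cnt S t.
Proof.
rewrite -(count_lt_eq S (leq_addl n t)) iotaD count_cat; lia.
Qed.

Definition lo (S : pred nat) r :=
  count (fun p => S p && S (r - p) && (p + p < r)) (iota 0 r.+1).
Definition cle (S : pred nat) r :=
  count (fun p => S p && S (r - p) && (p + p <= r)) (iota 0 r.+1).

Lemma refl_perm r : perm_eq (map (fun p => r - p) (iota 0 r.+1)) (iota 0 r.+1).
Proof.
apply: uniq_perm; last 2 first.
- exact: iota_uniq.
- move=> i; apply/mapP/idP => [[p _ ->]|h]; first by rewrite mem_iota; lia.
  exists (r - i); move: h; rewrite !mem_iota; lia.
rewrite map_inj_in_uniq ?iota_uniq //.
by move=> p q; rewrite !mem_iota /= => hp hq; lia.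
Qed.

Lemma cardA_split (S : pred nat) r : cardA S r = cle S r + lo S r.
Proof.
rewrite /cardA (count_split _ (fun p => p + p <= r)) /cle; congr (_ + _).
rewrite /lo; have /permP P := refl_perm r.
rewrite -P count_map; apply: eq_in_count => p; rewrite mem_iota /= => hp.
have -> : r - (r - p) = p by lia.
rewrite [S (r - p) && S p]andbC; congr (_ && _); lia.
Qed.


Lemma LB_odd (S : pred nat) x y z : S x -> (forall p, S p -> p < x -> Q S p) ->
  S y -> S z -> x <= y -> y <= z -> (cnt S x).*2.+1 <= cardA S (y + z).
Proof.
move=> Sx hQ Sy Sz hxy hyz; rewrite cardA_split -addnn.
have h1 : cnt S x <= lo S (y + z).
  rewrite -(count_lt_eq S (n := (y + z).+1)); last lia.
  apply: count_sub_in => p _ /andP[Sp pl].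
  rewrite Sp (hQ p Sp pl y z Sy Sz) /=; lia.
have h2 : (cnt S x).+1 <= cle S (y + z).
  have e : count (fun p => (S p && (p < x)) || (p == y)) (iota 0 (y + z).+1) = (cnt S x).+1.
    rewrite count_disj; last by move=> p /andP[_ h]; apply/eqP; lia.
    rewrite count_lt_eq ?count_pred1_iota; lia.
  rewrite -e; apply: count_sub_in => p _ /orP[/andP[Sp pl] | /eqP ->].
    by rewrite Sp (hQ p Sp pl y z Sy Sz) /=; lia.
  by rewrite Sy (_ : y + z - y = z) ?Sz /=; lia.
lia.
Qed.


Lemma lo_le_cle (S : pred nat) r : lo S r <= cle S r.
Proof. apply: count_sub_in => p _ /andP[-> h]; lia. Qed.

Lemma UB1 (S : pred nat) x r : S x -> Q S x ->
  (cnt S x).*2.+1 <= cardA S r -> (x + x <= r) && S (r - x).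
Proof.
move=> Sx hQ; rewrite cardA_split -addnn.
case: (boolP (has (fun a => S a && S (r - a) && (a + a <= r) && (x <= a)) (iota 0 r.+1))).
  case/hasP => a _ /andP[/andP[/andP[Sa Sra] ha] hxa] _.
  have -> : r - x = a + (r - a) - x by lia.
  rewrite hQ //; [lia | lia].
move/hasPn => h.
have : cle S r <= cnt S x.
  apply: leq_trans (count_lt_le S x r.+1).
  apply: count_sub_in => p /h; rewrite /= => np /andP[/andP[Sp Srp] hp].
  by rewrite Sp /=; move: np; rewrite Sp Srp hp /=; lia.
have := lo_le_cle S r; lia.
Qed.

Lemma UB2 (S : pred nat) x : S x -> cardA S (x + x) <= (cnt S x).*2.+1.
Proof.
move=> Sx; rewrite cardA_split -addnn.
have h1 : lo S (x + x) <= cnt S x.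
  apply: leq_trans (count_lt_le S x (x + x).+1).
  apply: count_sub_in => p _ /andP[/andP[Sp _] hp]; rewrite Sp /=; lia.
have h2 : cle S (x + x) <= cnt S x.+1.
  apply: leq_trans (count_lt_le S x.+1 (x + x).+1).
  apply: count_sub_in => p _ /andP[/andP[Sp _] hp]; rewrite Sp /=; lia.
move: h2; rewrite cntS Sx /=; lia.
Qed.

Lemma LB_even (S : pred nat) x r : S x -> (forall p, S p -> Q S p) ->
  x + x < r -> S (r - x) -> (cnt S x).*2.+2 <= cardA S r.
Proof.
move=> Sx hQ hr Srx; rewrite cardA_split -addnn.
have h1 : cnt S x.+1 <= lo S r.
  rewrite -(count_lt_eq S (n := r.+1)); last lia.
  apply: count_sub_in => p _ /andP[Sp pl].
  have -> : r - p = x + (r - x) - p by lia.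
  rewrite Sp hQ //=; lia.
move: h1; rewrite cntS Sx /=; have := lo_le_cle S r; lia.
Qed.

Lemma GB (S : pred nat) N d r : (forall n, N <= n -> S n) ->
  cardA S r < d -> r < N + N + d.
Proof.
move=> hN; rewrite ltnNge [r < _]ltnNge; apply: contra => hr.
rewrite /cardA.
have -> : r.+1 = N + ((r.+1 - N - N) + N) by lia.
rewrite iotaD iotaD !count_cat add0n (count_all_iota (m := N)); first lia.
move=> i hi; apply/andP; split; apply: hN; lia.
Qed.

Lemma CT (S : pred nat) (hS : numerical_semigroup S) (X : pred nat) M :
  (forall r, S r -> X r -> r < M) ->
  has_card (fun i => 1 <= i /\ X (rho S i)) (count (fun x => S x && X x) (iota 0 M)).
Proof.
move=> hM.
exists (map (fun x => (cnt S x).+1) (filter (fun x => S x && X x) (iota 0 M))).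
split; [|split].
- rewrite map_inj_in_uniq ?filter_uniq ?iota_uniq //.
  move=> a b; rewrite !mem_filter => /andP[/andP[Sa _] _] /andP[/andP[Sb _] _] [e].
  exact: (cnt_inj Sa Sb e).
- move=> i; split.
    case/mapP => x; rewrite mem_filter => /andP[/andP[Sx Xx] _] ->.
    by rewrite rho_cnt.
  case=> hi Xi; have [Sr cr] := rho_spec hS hi.
  apply/mapP; exists (rho S i).
    by rewrite mem_filter Sr Xi mem_iota /= hM.
  rewrite cr; lia.
- by rewrite size_map size_filter.
Qed.

Lemma HU (P : nat -> Prop) n m : has_card P n -> has_card P m -> n = m.
Proof.
case=> s [us [ms <-]] [t [ut [mt <-]]].
apply: perm_size; apply: uniq_perm => // i.
apply/idP/idP => h; [apply/mt; apply/ms | apply/ms; apply/mt] => //.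
Qed.

Lemma CF (S : pred nat) (hS : numerical_semigroup S) N x M :
  (forall n, N <= n -> S n) -> S x -> x + x + N <= M ->
  count (fun r => S r && ~~ ((x + x <= r) && S (r - x))) (iota 0 M) = x + cnt S x.
Proof.
move=> hN Sx hM.
have cl : forall a b, S a -> S b -> S (a + b) by case: hS => _ [].
have e1 := count_split S (fun r => (x + x <= r) && S (r - x)) (iota 0 M).
have e2 : count (fun r => S r && ((x + x <= r) && S (r - x))) (iota 0 M) =
          count (fun t => (x <= t) && S t) (iota 0 (M - x)).
  have -> : M = x + (M - x) by lia.
  rewrite iotaD count_cat add0n.
  rewrite (eq_in_count (a2 := pred0) (s := iota 0 x)); last first.
    by move=> p; rewrite mem_iota /= => hp; apply/negP => /andP[_ /andP[h _]]; lia.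
  rewrite count_pred0 add0n -[x in iota x _]addn0 iotaDl count_map.
  have -> : x + (M - x) - x = M - x by lia.
  apply: eq_count => u /=.
  rewrite addKn leq_add2l.
  case: (x <= u) => //=; case St: (S u) => /=; rewrite ?andbF //.
  by rewrite cl.
have e3 := count_split S (fun t => x <= t) (iota 0 (M - x)).
have e4 : count (fun t => S t && ~~ (x <= t)) (iota 0 (M - x)) = cnt S x.
  rewrite -(count_lt_eq S (n := M - x)); last lia.
  by apply: eq_count => t; rewrite -ltnNge.
have e5 : count (fun t => (x <= t) && S t) (iota 0 (M - x)) =
          count (fun t => S t && (x <= t)) (iota 0 (M - x)).
  by apply: eq_count => t; rewrite andbC.
have e6 : count S (iota 0 M) = count S (iota 0 (M - x)) + x.
  have hx : x <= M by lia.
  rewrite -{1}(subnK hx) iotaD count_cat add0n (count_all_iota (m := M - x)) //.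
  move=> i hi; apply: hN; lia.
lia.
Qed.


Theorem mainTheorem2 (S : pred nat) (hS : numerical_semigroup S) :
  Arf S <->
  (forall d, 0 < d -> has_card (Rset S d) (rho S (uphalf d) + d./2)).
Proof.
have [_ [cl [N hN]]] := hS.
split.
- move=> hA; have hQ := (Arf_Q hS).1 hA.
  have hQ' : forall p, S p -> Q S p by [].
  move=> d d0.
  have k1 : 1 <= uphalf d by rewrite uphalf_half; move: d0 (odd_double_half d); case: (odd d) => /=; lia.
  have [Sx cx] := rho_spec hS k1.
  set x := rho S (uphalf d) in Sx cx *.
  pose M := N + N + d + (x + x + N).
  have hc := CT hS (X := fun r => cardA S r < d) (M := M)
     (fun r _ h => leq_trans (GB hN h) (leq_addr _ _)).
  suff e : count (fun r => S r && (cardA S r < d)) (iota 0 M) = x + d./2 by rewrite -e.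
  have hd := odd_double_half d; have hu := uphalf_half d.
  rewrite -!addnn in hd.
  case od: (odd d) hd hu => /= hd hu.
  + have hMx : x + x + N <= M by rewrite /M; lia.
    have cf := CF hS hN Sx hMx.
    have eK : cnt S x = d./2 by lia.
    rewrite -eK -cf.
    apply: eq_in_count => r _ /=; case Sr: (S r) => //=.
    apply/idP/idP => h.
      apply/negP => /andP[h1 h2].
      have hx2 : x <= r - x by lia.
      have := LB_odd Sx (fun p Sp _ => hQ' p Sp) Sx h2 (leqnn x) hx2.
      rewrite (_ : x + (r - x) = r); last lia. rewrite -addnn; lia.
    rewrite ltnNge; apply/negP => h'.
    have h3 : (cnt S x).*2.+1 <= cardA S r by rewrite -addnn; lia.
    by move: (UB1 Sx (hQ' x Sx) h3); rewrite (negbTE h).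
  + have hMx : x + x + N <= M by rewrite /M; lia.
    have cf := CF hS hN Sx hMx.
    have eK : (cnt S x).+1 = d./2 by lia.
    have Sxx : S (x + x) by apply: cl.
    transitivity (count (fun r => (S r && ~~ ((x + x <= r) && S (r - x))) || (r == x + x)) (iota 0 M)).
      apply: eq_in_count => r _ /=.
      case: (eqVneq r (x + x)) => [->|ne].
        rewrite orbT Sxx /=; have := UB2 Sx; rewrite -addnn; lia.
      rewrite orbF; case Sr: (S r) => //=.
      apply/idP/idP => h.
        apply/negP => /andP[h1 h2].
        have h1' : x + x < r by rewrite ltn_neqAle eq_sym ne h1.
        have := LB_even Sx hQ' h1' h2; rewrite -addnn; lia.
      rewrite ltnNge; apply/negP => h'.
      have h3 : (cnt S x).*2.+1 <= cardA S r by rewrite -addnn; lia.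
      by move: (UB1 Sx (hQ' x Sx) h3); rewrite (negbTE h).
    rewrite count_disj; last first.
      move=> p /andP[_ h]; apply/negP => /eqP e; move: h; rewrite e leqnn /=.
      by rewrite (_ : x + x - x = x) ?Sx //; lia.
    rewrite cf count_pred1_iota; first lia.
    rewrite /M; lia.
- move=> H; apply/(Arf_Q hS) => x; elim/ltn_ind: x => x IH Sx.
  set K := cnt S x.
  have hd := H K.*2.+1 (ltn0Sn _).
  have eu : uphalf K.*2.+1 = K.+1 by rewrite /= doubleK.
  have eh : K.*2.+1./2 = K by rewrite /= uphalf_double.
  rewrite eu eh rho_cnt // in hd.
  pose M := N + N + K.*2.+1 + (x + x + N).
  have hc := CT hS (X := fun r => cardA S r < K.*2.+1) (M := M)
     (fun r _ h => leq_trans (GB hN h) (leq_addr _ _)).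
  have e := HU hd hc.
  have hMx : x + x + N <= M by rewrite /M; lia.
  have cf := CF hS hN Sx hMx.
  have hQl : forall p, S p -> p < x -> Q S p by move=> p Sp pl; apply: IH.
  have sub : forall r, S r && (cardA S r < K.*2.+1) -> S r && ~~ ((x + x <= r) && S (r - x)).
    move=> r /andP[Sr hr]; rewrite Sr /=; apply/negP => /andP[h1 h2].
    have hx2 : x <= r - x by lia.
    have := LB_odd Sx hQl Sx h2 (leqnn x) hx2.
    rewrite (_ : x + (r - x) = r); last lia. lia.
  have key := count_sub_eq sub (etrans (esym e) (esym cf)).
  move=> y z Sy Sz hxy hyz.
  have Syz : S (y + z) by apply: cl.
  have lb := LB_odd Sx hQl Sy Sz hxy hyz.
  case: (ltnP (y + z) M) => hyzM; last by apply: hN; rewrite /M in hyzM; lia.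
  case V: ((x + x <= y + z) && S (y + z - x)); first by case/andP: V.
  have := key (y + z); rewrite mem_iota /= hyzM Syz V /= => /(_ isT isT); lia.
Qed.
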